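(* Let $\mathbb{F}$ be a field and $\mathcal{C}_2 \subsetneqq \mathcal{C}_1 \subseteq \mathbb{F}^{m \times n}$ linear codes. Then $K_{M,0}(\mathcal{C}_1,\mathcal{C}_2) = 0$, $K_{M,n}(\mathcal{C}_1,\mathcal{C}_2) = \dim(\mathcal{C}_1) - \dim(\mathcal{C}_2)$, and for every $0 \leq \mu \leq n-1$, $$0 \leq K_{M,\mu+1}(\mathcal{C}_1,\mathcal{C}_2) - K_{M,\mu}(\mathcal{C}_1,\mathcal{C}_2) \leq m.$$
   Context: ${\rm Row}(V)$ is the row space. For a subspace $\mathcal{L} \subseteq \mathbb{F}^n$, $\mathcal{V}_\mathcal{L} = \{V \in \mathbb{F}^{m\times n} \mid {\rm Row}(V) \subseteq \mathcal{L}\}$. For $0 \le \mu \le n$, $K_{M,\mu}(\mathcal{C}_1,\mathcal{C}_2) = \max\{\dim(\mathcal{C}_1 \cap \mathcal{V}_\mathcal{L}) - \dim(\mathcal{C}_2 \cap \mathcal{V}_\mathcal{L}) \mid \mathcal{L} \subseteq \mathbb{F}^n \text{ subspace}, \dim \mathcal{L} \le \mu\}$. *)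

(* Defs.v *)
From HB Require Import structures.
From mathcomp Require Import all_boot all_order all_algebra.
From mathcomp Require Import boolp.
Set Implicit Arguments. Unset Strict Implicit. Unset Printing Implicit Defensive.
Import Order.TTheory GRing.Theory Num.Theory.
Local Open Scope ring_scope.

Section Defs.
Variables (F : fieldType) (m n : nat).

(* V_L = { V in F^{m x n} | Row(V) <= L } : every row of V lies in L
   (Row(V) is the span of the rows of V). *)
Definition VL (L : {vspace 'rV[F]_n}) : {vspace 'M[F]_(m, n)} :=
  (\bigcap_(i < m) (linfun (row i) @^-1: L))%VS.

Definition Kdiff (C1 C2 : {vspace 'M[F]_(m, n)}) (L : {vspace 'rV[F]_n}) : int :=
  (\dim (C1 :&: VL L)%VS)%:Z - (\dim (C2 :&: VL L)%VS)%:Z.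

(* K_{M,mu}(C1,C2) = max { Kdiff C1 C2 L | dim L <= mu }.
   The set of values is nonempty (L = 0 gives 0), contained in [-mn, mn],
   and its max is >= 0 (attained at L = 0) and <= dim C1 <= m*n; hence the
   maximum equals the largest k in {0,..,m*n} that is attained. *)
Definition KM (C1 C2 : {vspace 'M[F]_(m, n)}) (mu : nat) : int :=
  (\max_(k < (m * n).+1 |
      `[< exists L : {vspace 'rV[F]_n}, (\dim L <= mu)%N /\ Kdiff C1 C2 L = k%:Z >])
     (k : nat))%:Z.

End Defs.

(* Main.v *)
Require Import Defs.
From HB Require Import structures.
From mathcomp Require Import all_boot all_order all_algebra.
From mathcomp Require Import boolp zify.
Import Order.TTheory GRing.Theory Num.Theory.
Local Open Scope ring_scope.

Section S.
Variables (F : fieldType) (m n : nat).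

Lemma memVL (L : {vspace 'rV[F]_n}) (M : 'M[F]_(m, n)) :
  (M \in VL m L) = [forall i, row i M \in L].
Proof.
rewrite /VL memvE; apply/subv_bigcapP/forallP => H i.
  by move: (H i isT); rewrite -memvE -memv_preim lfunE.
by move=> _; rewrite -memvE -memv_preim lfunE; apply: H.
Qed.

Lemma VLS (L1 L2 : {vspace 'rV[F]_n}) : (L1 <= L2)%VS -> (VL m L1 <= VL m L2)%VS.
Proof.
move=> /subvP s; apply/subvP => M; rewrite !memVL => /forallP H.
by apply/forallP => i; apply: s.
Qed.

Lemma VL0 : VL m (0%VS : {vspace 'rV[F]_n}) = 0%VS.
Proof.
apply/eqP; rewrite -subv0; apply/subvP => M; rewrite memVL memv0 => /forallP H.
apply/eqP/row_matrixP => i; rewrite row0; apply/eqP; rewrite -memv0; exact: H.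
Qed.

Lemma VLf : VL m (fullv : {vspace 'rV[F]_n}) = fullv.
Proof.
apply/eqP; rewrite eqEsubv subvf /=; apply/subvP => M _; rewrite memVL.
by apply/forallP => i; rewrite memvf.
Qed.

Lemma dimVLline (v : 'rV[F]_n) : (\dim (VL m <[v]>) <= m)%N.
Proof.
pose f := linfun (@mulmxr F m 1 n v).
apply: (@leq_trans (\dim (limg f))); last first.
  apply: (@leq_trans (\dim (fullv : {vspace 'cV[F]_m}))); first by rewrite -(limg_ker_dim f fullv) leq_addl.
  by rewrite dimvf dim_matrix; lia.
apply: dimvS; apply/subvP => M; rewrite memVL => /forallP H.
have /fin_all_exists [k Hk] : forall i, exists k, row i M = k *: v.
  by move=> i; apply/vlineP.
have -> : M = f (\col_i k i).
  rewrite /f lfunE /=; apply/row_matrixP => i; rewrite Hk; apply/rowP => j.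
  by rewrite !mxE big_ord1 !mxE.
exact: memv_img (memvf _).
Qed.

Lemma VL_add (L1 L2 : {vspace 'rV[F]_n}) :
  (VL m (L1 + L2) <= VL m L1 + VL m L2)%VS.
Proof.
apply/subvP => M; rewrite memVL => /forallP H.
have /fin_all_exists [p Hp] : forall i, exists p : 'rV[F]_n * 'rV[F]_n,
   [/\ p.1 \in L1, p.2 \in L2 & row i M = p.1 + p.2].
  move=> i; have /memv_addP [a Ha [b Hb E]] := H i; by exists (a, b).
have -> : M = (\matrix_i (p i).1) + (\matrix_i (p i).2).
  apply/row_matrixP => i; case: (Hp i) => _ _ ->; apply/rowP => j; by rewrite !mxE.
apply: memv_add; rewrite memVL; apply/forallP => i; rewrite rowK; by case: (Hp i).
Qed.

Variables (C1 C2 : {vspace 'M[F]_(m, n)}).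
Hypothesis hC : (C2 <= C1)%VS.

Lemma d12 L : (\dim (C2 :&: VL m L) <= \dim (C1 :&: VL m L))%N.
Proof. by apply: dimvS; apply: capvS. Qed.

Lemma Kdiff_nat L :
  Kdiff C1 C2 L = (\dim (C1 :&: VL m L) - \dim (C2 :&: VL m L))%N%:Z.
Proof. by rewrite /Kdiff subzn ?d12. Qed.

Lemma Kdiff_le_C L : Kdiff C1 C2 L <= (\dim C1)%:Z - (\dim C2)%:Z.
Proof.
set X := (C1 :&: VL m L)%VS.
have h1 := dimv_sum_cap X C2.
have h2 : (\dim (X + C2) <= \dim C1)%N by apply: dimvS; rewrite subv_add capvSl hC.
have h3 : (\dim (X :&: C2) <= \dim (C2 :&: VL m L))%N.
  apply: dimvS; apply/subvP => x; rewrite !memv_cap => /andP [/andP [_ ->] ->].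
  by [].
rewrite /Kdiff -/X; lia.
Qed.

Lemma Kdiff_step L L' : (L' <= L)%VS ->
  Kdiff C1 C2 L - Kdiff C1 C2 L' <= (\dim (VL m L))%:Z - (\dim (VL m L'))%:Z.
Proof.
move=> sL; have sV : (VL m L' <= VL m L)%VS by apply: VLS.
set X := (C1 :&: VL m L)%VS.
have h1 := dimv_sum_cap X (VL m L').
have h2 : (\dim (X + VL m L') <= \dim (VL m L))%N by apply: dimvS; rewrite subv_add capvSr sV.
have h3 : (\dim (X :&: VL m L') <= \dim (C1 :&: VL m L'))%N.
  apply: dimvS; apply/subvP => x; rewrite !memv_cap => /andP [/andP [-> _] ->].
  by [].
have h4 : (\dim (C2 :&: VL m L') <= \dim (C2 :&: VL m L))%N.
  by apply: dimvS; apply: capvS.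
rewrite /Kdiff -/X; lia.
Qed.

Lemma Kdiff_bound L : (\dim (C1 :&: VL m L) - \dim (C2 :&: VL m L) < (m * n).+1)%N.
Proof.
rewrite ltnS; apply: leq_trans (leq_subr _ _) _.
apply: leq_trans (dimvS (subvf _)) _; by rewrite dimvf dim_matrix.
Qed.

Lemma KM_ub mu L : (\dim L <= mu)%N -> Kdiff C1 C2 L <= KM C1 C2 mu.
Proof.
move=> hL; rewrite Kdiff_nat /KM lez_nat.
apply: (leq_bigmax_cond (Ordinal (Kdiff_bound L))).
by apply/asboolP; exists L; split => //; rewrite Kdiff_nat.
Qed.

Lemma Kdiff0 : Kdiff C1 C2 0%VS = 0.
Proof. by rewrite /Kdiff VL0 !capv0 dimv0. Qed.

Lemma KM_att mu : exists L, (\dim L <= mu)%N /\ Kdiff C1 C2 L = KM C1 C2 mu.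
Proof.
rewrite /KM (bigop.bigmax_eq_arg ord0); last first.
  by apply/asboolP; exists 0%VS; rewrite dimv0 Kdiff0.
case: arg_maxnP => //=; first by apply/asboolP; exists 0%VS; rewrite dimv0 Kdiff0.
move=> i /asboolP [L [hL E]] _; by exists L.
Qed.


Lemma KM_step mu : KM C1 C2 mu.+1 - KM C1 C2 mu <= m%:Z.
Proof.
have [L [hL <-]] := KM_att mu.+1.
case: (leqP (\dim L) mu) => hLm.
  have := @KM_ub mu L hLm; lia.
have dL : \dim L = mu.+1 by apply/eqP; rewrite eqn_leq hL hLm.
set v := vpick L.
have vL : v \in L by apply: memv_pick.
have v0 : v != 0 by rewrite vpick0 -dimv_eq0 dL.
set L' := (L :\: <[v]>)%VS.
have hd := dimv_cap_compl L <[v]>.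
have dv : \dim <[v]> = 1%N by rewrite dim_vline v0.
have hc : \dim (L :&: <[v]>) = 1%N.
  apply/eqP; rewrite eqn_leq; apply/andP; split.
    by apply: leq_trans (dimvS (capvSr _ _)) _; rewrite dv.
  apply: leq_trans (dimvS (_ : <[v]> <= L :&: <[v]>)%VS); first by rewrite dv.
  by rewrite subv_cap -memvE vL subvv.
have dL' : (\dim L' <= mu)%N by rewrite /L'; lia.
have sL' : (L' <= L)%VS by apply: diffvSl.
have sL : (VL m L <= VL m L' + VL m <[v]>)%VS.
  apply: subv_trans (VL_add _ _); apply: VLS.
  by rewrite /L' addv_diff addvSl.
have h1 := dimv_sum_cap (VL m L') (VL m <[v]>).
have h2 := dimvS sL.
have h3 := dimVLline v.
have h4 := @Kdiff_step L L' sL'.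
have h5 := @KM_ub mu L' dL'.
clear -h1 h2 h3 h4 h5.
move: h4 h5; move: (Kdiff C1 C2 L) (Kdiff C1 C2 L') (KM C1 C2 mu) => a b c h4 h5.
move: h1 h2 h3 h4.
move: (\dim (VL m L)) (\dim (VL m L')) (\dim (VL m <[v]>)) (\dim (VL m L' + VL m <[v]>)) (\dim (VL m L' :&: VL m <[v]>)).
move=> x y z w t; lia.
Qed.

Theorem main :
  C2 != C1 ->
  [/\ KM C1 C2 0 = 0,
      KM C1 C2 n = (\dim C1)%:Z - (\dim C2)%:Z
    & forall mu : nat, (mu < n)%N ->
        0 <= KM C1 C2 mu.+1 - KM C1 C2 mu <= m%:Z].
Proof.
move=> _; split.
- have [L [hL <-]] := KM_att 0.
  have /eqP -> : L == 0%VS by rewrite -dimv_eq0 -leqn0.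
  exact: Kdiff0.
- apply/eqP; rewrite eq_le; apply/andP; split.
    have [L [_ <-]] := KM_att n; exact: Kdiff_le_C.
  have -> : (\dim C1)%:Z - (\dim C2)%:Z = Kdiff C1 C2 fullv.
    by rewrite /Kdiff VLf !capvf.
  by apply: KM_ub; rewrite dimvf dim_matrix; lia.
- move=> mu _; apply/andP; split; last first.
    have := KM_step mu; lia.
  have [L [hL <-]] := KM_att mu.
  have := @KM_ub mu.+1 L (leqW hL); lia.
Qed.

End S.

Theorem proposition13 (F : fieldType) (m n : nat)
    (C1 C2 : {vspace 'M[F]_(m, n)}) :
  (C2 <= C1)%VS -> C2 != C1 ->
  [/\ KM C1 C2 0 = 0,
      KM C1 C2 n = (\dim C1)%:Z - (\dim C2)%:Z
    & forall mu : nat, (mu < n)%N ->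
        0 <= KM C1 C2 mu.+1 - KM C1 C2 mu <= m%:Z].
Proof. by move=> hC; apply: main. Qed.
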